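(* Let $\nu>0$ and $\lambda>0$. For $t>\lambda$ define $$K_1(t;\lambda)=\int_\lambda^t\frac{du}{u^{\nu+1}}\Big\{\frac{1}{(t+\lambda-u)^{\nu}}-\frac{1}{t^{\nu}}\Big\},\qquad K_2(t;\lambda)=\int_\lambda^t\frac{du}{u^{\nu+1}(t+\lambda-u)^{(2\nu)\wedge(\nu+1)}}.$$ Then (1) as $t\to\infty$, $$K_1(t;\lambda)=\frac{1}{(t+\lambda)^{2\nu}}\int_1^{t/\lambda}\frac{(v+1)^{2\nu}-v^{2\nu}}{v^{\nu+1}}\,dv+O(t^{-\nu-1});$$ (2) $\displaystyle\limsup_{t\to\infty}t^{(2\nu)\wedge(\nu+1)}K_2(t;\lambda)\le\frac{2}{\nu\lambda^{\nu}}$.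
   Context: $x\wedge y=\min\{x,y\}$. *)

(* Defs.v *)
From Stdlib Require Import Reals.
From Coquelicot Require Import Coquelicot.
Open Scope R_scope.

(* x ^ a for x > 0 and real a is Rpower x a. All bases below are positive
   on the integration ranges (u in [lam,t], t + lam - u in [lam,t]). *)

Definition expo (nu : R) : R := Rmin (2 * nu) (nu + 1).

Definition K1 (nu lam t : R) : R :=
  RInt (fun u => / Rpower u (nu + 1) *
                 (/ Rpower (t + lam - u) nu - / Rpower t nu)) lam t.

Definition K2 (nu lam t : R) : R :=
  RInt (fun u => / (Rpower u (nu + 1) * Rpower (t + lam - u) (expo nu))) lam t.

Definition K1_main (nu lam t : R) : R :=
  / Rpower (t + lam) (2 * nu) *
  RInt (fun v => (Rpower (v + 1) (2 * nu) - Rpower v (2 * nu)) / Rpower v (nu + 1))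
       1 (t / lam).

(* Main.v *)
Require Import Defs.
From Stdlib Require Import Reals Lra.
From Coquelicot Require Import Coquelicot.
Open Scope R_scope.

Lemma expLe x y : x <= y -> exp x <= exp y.
Proof. intros [H|H]; [left; apply exp_increasing; auto| subst; lra]. Qed.

Lemma Ppos x c : 0 < Rpower x c.
Proof. unfold Rpower; apply exp_pos. Qed.

Lemma Pmul x y c : 0 < x -> 0 < y -> Rpower (x*y) c = Rpower x c * Rpower y c.
Proof. intros; rewrite Rpower_mult_distr; auto. Qed.

Lemma Pinv x c : 0 < x -> Rpower (/x) c = / Rpower x c.
Proof. intros. unfold Rpower. rewrite ln_Rinv; auto. rewrite <- exp_Ropp. f_equal; ring. Qed.

Lemma Pdiv x y c : 0 < x -> 0 < y -> Rpower (x/y) c = Rpower x c / Rpower y c.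
Proof. intros. unfold Rdiv. rewrite Pmul, Pinv; auto. apply Rinv_0_lt_compat; auto. Qed.

Lemma Pp1 x c : 0 < x -> Rpower x (c+1) = Rpower x c * x.
Proof. intros. rewrite Rpower_plus, Rpower_1; auto. Qed.

Lemma P2 x c : Rpower x (2*c) = Rpower x c * Rpower x c.
Proof. replace (2*c) with (c+c) by ring. apply Rpower_plus. Qed.

Lemma P1b c : Rpower 1 c = 1.
Proof. unfold Rpower. rewrite ln_1, Rmult_0_r, exp_0; auto. Qed.

Lemma x_le_Px x th : 0 < x -> x <= 1 -> 0 < th <= 1 -> x <= Rpower x th.
Proof.
  intros. unfold Rpower. rewrite <- (exp_ln x) at 1 by auto. apply expLe.
  assert (ln x <= 0). { rewrite <- ln_1. apply ln_le; auto. } nra.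
Qed.

Lemma ln_le_m1 y : 0 < y -> ln y <= y - 1.
Proof. intros. pose proof (exp_ineq1_le (ln y)). rewrite exp_ln in H0; auto. lra. Qed.

Lemma exp_le_lin y M : 0 <= y -> y <= M -> exp y <= 1 + y * exp M.
Proof.
  intros. pose proof (exp_ineq1_le (-y)). rewrite exp_Ropp in H1.
  assert (exp y <= exp M) by (apply expLe; auto).
  assert (0 < exp y) by apply exp_pos.
  assert (1 - y <= / exp y) by lra.
  assert ((1-y) * exp y <= 1).
  { replace 1 with (/exp y * exp y) at 2 by (field; lra). apply Rmult_le_compat_r; lra. }
  nra.
Qed.
Lemma div_le1 x y : 0 < y -> x <= y -> x / y <= 1.
Proof. intros. apply Rmult_le_reg_r with y; auto. replace (x/y*y) with x by (field; lra). lra. Qed.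
Lemma core q th u w T : 0<q -> 0<th<=1 -> 0<u -> u<=w -> u+w=T ->
  Rpower (T/w) q <= 1 + (2*q*exp q) * Rpower (u/T) th.
Proof.
  intros Hq Hth Hu Huw HT.
  assert (Hw : 0 < w) by lra.
  set (z := u/w).
  assert (Hz0 : 0 < z) by (unfold z; apply Rdiv_lt_0_compat; lra).
  assert (Hz1 : z <= 1) by (unfold z; apply div_le1 ; lra).
  assert (E : T/w = 1 + z) by (unfold z; subst T; field; lra).
  rewrite E. unfold Rpower at 1.
  assert (L : ln (1+z) <= z) by (pose proof (ln_le_m1 (1+z)); lra).
  assert (S1 : exp (q * ln (1+z)) <= exp (q*z)) by (apply expLe; nra).
  assert (S2 : exp (q*z) <= 1 + (q*z) * exp q) by (apply exp_le_lin; nra).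
  assert (Z2 : z <= 2 * (u/T)).
  { unfold z. apply Rmult_le_reg_r with (w*T). nra.
    replace (u/w*(w*T)) with (u*T) by (field; lra).
    replace (2*(u/T)*(w*T)) with (2*u*w) by (field; lra). nra. }
  assert (X : u/T <= Rpower (u/T) th).
  { apply x_le_Px; auto. apply Rdiv_lt_0_compat; lra.
    apply div_le1; lra. }
  assert (0 < exp q) by apply exp_pos.
  assert (q*z*exp q <= 2*q*exp q * Rpower (u/T) th).
  { assert (0 < q*exp q) by nra. apply Rle_trans with (2*q*exp q*(u/T)). nra.
    apply Rmult_le_compat_l; nra. }
  lra.
Qed.

Lemma halfA nu q th t u w T : 0<nu -> 0<q -> 0<th<=1 -> 0<u -> u<=w -> u+w=T -> 0<t<=T ->
  Rpower t q * / (Rpower u (nu+1) * Rpower w q) <=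
  / (Rpower u nu * u) + (2*q*exp q * / Rpower T th) * / (Rpower u (nu-th) * u).
Proof.
  intros Hnu Hq Hth Hu Huw HT Ht.
  assert (Hw : 0 < w) by lra. assert (HT0 : 0 < T) by lra.
  assert (E1 : Rpower t q <= Rpower T q) by (apply Rle_Rpower_l; lra).
  pose proof (core q th u w T Hq Hth Hu Huw HT) as C.
  rewrite Pdiv in C by lra. rewrite Pdiv in C by lra.
  rewrite Pp1 by lra.
  replace (Rpower u nu) with (Rpower u (nu-th) * Rpower u th)
    by (rewrite <- Rpower_plus; f_equal; ring).
  pose proof (Ppos u (nu-th)). pose proof (Ppos u th). pose proof (Ppos w q).
  pose proof (Ppos T q). pose proof (Ppos T th). pose proof (Ppos t q).
  set (A := Rpower u (nu-th)) in *. set (B := Rpower u th) in *.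
  set (W := Rpower w q) in *. set (TQ := Rpower T q) in *. set (TT := Rpower T th) in *.
  set (tq := Rpower t q) in *. set (K := 2*q*exp q) in *.
  apply Rle_trans with (TQ * / (A*B*u*W)).
  { apply Rmult_le_compat_r; auto. left; apply Rinv_0_lt_compat. 
    repeat apply Rmult_lt_0_compat; auto. }
  replace (TQ * / (A*B*u*W)) with (/(A*B*u) * (TQ/W)) by (field; repeat split; lra).
  apply Rle_trans with (/(A*B*u) * (1 + K * (B/TT))).
  { apply Rmult_le_compat_l; auto. left; apply Rinv_0_lt_compat.
    repeat apply Rmult_lt_0_compat; auto. }
  right. field. repeat split; lra.
Qed.

Lemma halfB nu q u w : 0<q -> q <= nu+1 -> 0<w -> w<=u ->
  / (Rpower u (nu+1) * Rpower w q) <= / (Rpower w (nu+1) * Rpower u q).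
Proof.
  intros. apply Rinv_le_contravar.
  - apply Rmult_lt_0_compat; apply Ppos.
  - replace (nu+1) with (q + (nu+1-q)) by ring. rewrite !Rpower_plus.
    pose proof (Ppos u q). pose proof (Ppos w q).
    assert (Rpower w (nu+1-q) <= Rpower u (nu+1-q)) by (apply Rle_Rpower_l; lra).
    assert (0 < Rpower u q * Rpower w q) by (apply Rmult_lt_0_compat; auto). nra.
Qed.

Lemma PW nu q th a t u : 0<nu -> 0<q -> q <= nu+1 -> 0<th<=1 -> 0<a -> a<=u<=t ->
  Rpower t q * / (Rpower u (nu+1) * Rpower (t+a-u) q) <=
  (/ (Rpower u nu * u) + (2*q*exp q * / Rpower (t+a) th) * / (Rpower u (nu-th) * u)) +
  (/ (Rpower (t+a-u) nu * (t+a-u)) + (2*q*exp q * / Rpower (t+a) th) * / (Rpower (t+a-u) (nu-th) * (t+a-u))).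
Proof.
  intros Hnu Hq Hqp Hth Ha Hu.
  assert (0 < exp q) by apply exp_pos.
  assert (0 < / Rpower (t+a) th) by (apply Rinv_0_lt_compat, Ppos).
  assert (forall x, 0 < x -> 0 <= / (Rpower x nu * x) + (2*q*exp q * / Rpower (t+a) th) * / (Rpower x (nu-th) * x)).
  { intros x Hx. assert (0 < / (Rpower x nu * x)) by (apply Rinv_0_lt_compat, Rmult_lt_0_compat; [apply Ppos|lra]).
    assert (0 < / (Rpower x (nu-th) * x)) by (apply Rinv_0_lt_compat, Rmult_lt_0_compat; [apply Ppos|lra]).
    assert (0 < 2*q*exp q * / Rpower (t+a) th) by (repeat apply Rmult_lt_0_compat; lra). nra. }
  destruct (Rle_lt_dec u (t+a-u)).
  - pose proof (halfA nu q th t u (t+a-u) (t+a) Hnu Hq Hth ltac:(lra) r ltac:(ring) ltac:(lra)).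
    pose proof (H1 (t+a-u) ltac:(lra)). lra.
  - pose proof (halfB nu q u (t+a-u) Hq Hqp ltac:(lra) ltac:(lra)).
    pose proof (halfA nu q th t (t+a-u) u (t+a) Hnu Hq Hth ltac:(lra) ltac:(lra) ltac:(ring) ltac:(lra)).
    pose proof (H1 u ltac:(lra)).
    assert (0 < Rpower t q) by apply Ppos.
    assert (Rpower t q * / (Rpower u (nu + 1) * Rpower (t + a - u) q) <=
            Rpower t q * / (Rpower (t+a-u) (nu + 1) * Rpower u q)) by (apply Rmult_le_compat_l; lra).
    lra.
Qed.

Ltac sc := repeat split; try lra; try (apply Rgt_not_eq, exp_pos); try (apply Rgt_not_eq; apply Rmult_lt_0_compat; [apply exp_pos|lra]); try (apply Rgt_not_eq; apply Rmult_lt_0_compat; apply exp_pos).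

Lemma contR (f : R -> R) x : ex_derive f x -> continuous f x.
Proof. apply (@ex_derive_continuous R_AbsRing R_NormedModule). Qed.

Lemma I1 s a b : 0 < s -> 0 < a <= b ->
  is_RInt (fun u => / (Rpower u s * u)) a b ((/Rpower a s - /Rpower b s)/s).
Proof.
  intros Hs Hab. pose proof (Ppos a s). pose proof (Ppos b s).
  assert (E : (/Rpower a s - /Rpower b s)/s = (- / Rpower b s / s) - (- / Rpower a s / s)) by (field; lra).
  rewrite E. apply (is_RInt_derive (fun u => - / Rpower u s / s)).
  - intros x Hx. rewrite Rmin_left, Rmax_right in Hx by lra.
    unfold Rpower. auto_derive. sc. field. sc.
  - intros x Hx. rewrite Rmin_left, Rmax_right in Hx by lra.
    apply contR. unfold Rpower. auto_derive. sc.
Qed.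

Lemma I2 s a t : 0 < s -> 0 < a <= t ->
  is_RInt (fun u => / (Rpower (t+a-u) s * (t+a-u))) a t ((/Rpower a s - /Rpower t s)/s).
Proof.
  intros Hs Hab. pose proof (Ppos a s). pose proof (Ppos t s).
  assert (E : (/Rpower a s - /Rpower t s)/s = (/ Rpower (t+a-t) s / s) - (/ Rpower (t+a-a) s / s)).
  { replace (t+a-t) with a by ring. replace (t+a-a) with t by ring. field; lra. }
  rewrite E. apply (is_RInt_derive (fun u => / Rpower (t+a-u) s / s)).
  - intros x Hx. rewrite Rmin_left, Rmax_right in Hx by lra.
    unfold Rpower. auto_derive. sc. unfold Rminus in *. field. sc.
  - intros x Hx. rewrite Rmin_left, Rmax_right in Hx by lra.
    apply contR. unfold Rpower. auto_derive. sc.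
Qed.

Lemma I3 s b : 0 < s -> 1 <= b ->
  is_RInt (fun v => Rpower v s / v) 1 b ((Rpower b s - 1)/s).
Proof.
  intros Hs Hb.
  assert (E : (Rpower b s - 1)/s = Rpower b s / s - Rpower 1 s / s) by (rewrite P1b; field; lra).
  rewrite E. apply (is_RInt_derive (fun v => Rpower v s / s)).
  - intros x Hx. rewrite Rmin_left, Rmax_right in Hx by lra.
    unfold Rpower. auto_derive. sc. field. sc.
  - intros x Hx. rewrite Rmin_left, Rmax_right in Hx by lra.
    apply contR. unfold Rpower. auto_derive. sc.
Qed.

Lemma iplus (f g : R -> R) a b A B : is_RInt f a b A -> is_RInt g a b B ->
  is_RInt (fun x => f x + g x) a b (A + B).
Proof. intros. apply (is_RInt_plus f g); auto. Qed.
Lemma iminus (f g : R -> R) a b A B : is_RInt f a b A -> is_RInt g a b B ->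
  is_RInt (fun x => f x - g x) a b (A - B).
Proof. intros. apply (is_RInt_minus f g); auto. Qed.
Lemma iscal (f : R -> R) a b k A : is_RInt f a b A ->
  is_RInt (fun x => k * f x) a b (k * A).
Proof. intros. apply (is_RInt_scal f); auto. Qed.
Ltac toR := match goal with |- ?a = ?b => change (@eq R a b) end.
Ltac nz := repeat split; try lra; try (apply Rgt_not_eq, Ppos); try (apply Rgt_not_eq; repeat apply Rmult_lt_0_compat; try apply Ppos; lra).

Lemma final nu a t : 0 < nu -> 0 < a < t ->
  Rabs (/ Rpower (t+a) (2*nu) * ((Rpower (t/a) nu - 1)/nu) - / Rpower t nu * ((/ Rpower a nu - / Rpower t nu)/nu))
  <= (2*a*/Rpower a nu) * Rpower t (-nu-1).
Proof.
  intros Hnu Ha.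
  rewrite Pdiv by lra.
  replace (-nu-1) with (-(nu+1)) by ring. rewrite Rpower_Ropp, Pp1 by lra.
  set (R := Rpower (t/(t+a)) (2*nu)).
  assert (ER : R = Rpower t nu * Rpower t nu / Rpower (t+a) (2*nu)).
  { unfold R. rewrite Pdiv, P2 by lra. auto. }
  assert (HR1 : 1 - R <= 2*nu*a/t).
  { unfold R, Rpower. pose proof (exp_ineq1_le (2*nu*ln (t/(t+a)))).
    assert (ln ((t+a)/t) <= a/t).
    { pose proof (ln_le_m1 ((t+a)/t) ltac:(apply Rdiv_lt_0_compat; lra)).
      replace ((t+a)/t - 1) with (a/t) in H0 by (field; lra). auto. }
    assert (ln (t/(t+a)) = - ln ((t+a)/t)).
    { replace (t/(t+a)) with (/((t+a)/t)) by (field; lra).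
      apply ln_Rinv. apply Rdiv_lt_0_compat; lra. }
    rewrite H1 in H |- *. replace (2*nu*a/t) with (2*nu*(a/t)) by (field; lra).
    assert (nu * ln ((t+a)/t) <= nu*(a/t)) by (apply Rmult_le_compat_l; lra). lra. }
  assert (HR0 : R <= 1).
  { unfold R, Rpower. rewrite <- exp_0. apply expLe.
    assert (ln (t/(t+a)) <= 0).
    { rewrite <- ln_1. apply ln_le. apply Rdiv_lt_0_compat; lra. apply div_le1; lra. }
    nra. }
  pose proof (Ppos t nu) as Pt. pose proof (Ppos a nu) as Pa. pose proof (Ppos (t+a) (2*nu)) as PT.
  assert (Hpa : Rpower a nu <= Rpower t nu) by (apply Rle_Rpower_l; lra).
  set (pt := Rpower t nu) in *. set (pa := Rpower a nu) in *. set (PT2 := Rpower (t+a) (2*nu)) in *.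
  assert (EPT : / PT2 = R / (pt*pt)) by (rewrite ER; field; lra).
  rewrite EPT.
  replace (R / (pt * pt) * ((pt / pa - 1) / nu) - / pt * ((/ pa - / pt) / nu))
    with (- ((1-R)*(pt-pa)/(nu*pa*pt*pt))) by (field; lra).
  rewrite Rabs_Ropp. rewrite Rabs_right.
  2:{ apply Rle_ge. apply Rdiv_le_0_compat. apply Rmult_le_pos; lra.
      repeat apply Rmult_lt_0_compat; lra. }
  apply Rle_trans with ((2*nu*a/t) * pt / (nu*pa*pt*pt)).
  { apply Rmult_le_compat_r. left; apply Rinv_0_lt_compat; repeat apply Rmult_lt_0_compat; lra.
    apply Rle_trans with ((1-R)*pt). apply Rmult_le_compat_l; lra.
    apply Rmult_le_compat_r; lra. }
  right. field. repeat split; lra.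
Qed.

Lemma compR (f g dg : R -> R) a b :
  (forall x, Rmin a b <= x <= Rmax a b -> continuous f (g x)) ->
  (forall x, Rmin a b <= x <= Rmax a b -> is_derive g x (dg x) /\ continuous dg x) ->
  is_RInt (fun y => dg y * f (g y)) a b (RInt f (g a) (g b)).
Proof. intros. apply (is_RInt_comp f g dg); auto. Qed.

Lemma E2 nu T v : 0<T -> 0<v -> T/((v+1)*(v+1)) * (/Rpower (T*v/(v+1)) (nu+1) * /Rpower (T - T*v/(v+1)) nu)
  = /Rpower T (2*nu) * (Rpower (v+1) (2*nu) / Rpower v (nu+1)) * /(v+1).
Proof.
  intros. replace (T - T*v/(v+1)) with (T/(v+1)) by (field; lra).
  rewrite !Pdiv, !Pmul, !Pp1, !P2 by nra.
  pose proof (Ppos T nu). pose proof (Ppos v nu). pose proof (Ppos (v+1) nu).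
  field. repeat split; lra.
Qed.

Lemma E1 nu T v : 0<T -> 0<v -> - T/((v+1)*(v+1)) * (/Rpower (T/(v+1)) (nu+1) * /Rpower (T - T/(v+1)) nu)
  = - (/Rpower T (2*nu) * (Rpower (v+1) (2*nu) / Rpower v (nu+1)) * (v/(v+1))).
Proof.
  intros. replace (T - T/(v+1)) with (T*v/(v+1)) by (field; lra).
  rewrite !Pdiv, !Pmul, !Pp1, !P2 by nra.
  pose proof (Ppos T nu). pose proof (Ppos v nu). pose proof (Ppos (v+1) nu).
  field. repeat split; lra.
Qed.

Lemma K1_eq nu lam t : 0 < nu -> 0 < lam < t ->
  K1 nu lam t - K1_main nu lam t =
  / Rpower (t+lam) (2*nu) * ((Rpower (t/lam) nu - 1)/nu) - / Rpower t nu * ((/ Rpower lam nu - / Rpower t nu)/nu).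
Proof.
  intros Hnu Ha.
  set (T := t + lam). set (b := t/lam).
  assert (Hb : 1 <= b) by (unfold b; apply Rmult_le_reg_r with lam; [lra|]; replace (t/lam*lam) with t by (field; lra); lra).
  set (f := fun u => / Rpower u (nu+1) * / Rpower (t + lam - u) nu).
  assert (fc : forall y, 0 < y < T -> continuous f y).
  { intros y Hy. unfold f. apply contR. unfold Rpower. auto_derive. unfold T in Hy. sc. }
  assert (Hc2 := compR f (fun v => T*v/(v+1)) (fun v => T/((v+1)*(v+1))) 1 b).
  assert (Hc1 := compR f (fun v => T/(v+1)) (fun v => - T/((v+1)*(v+1))) 1 b).
  rewrite Rmin_left, Rmax_right in Hc1, Hc2 by lra. cbv beta in Hc1, Hc2.
  replace (T*1/(1+1)) with (T/2) in Hc2 by field.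
  replace (T*b/(b+1)) with t in Hc2 by (unfold T, b; field; lra).
  replace (T/(1+1)) with (T/2) in Hc1 by field.
  replace (T/(b+1)) with lam in Hc1 by (unfold T, b; field; lra).
  assert (HT : 0 < T) by (unfold T; lra).
  specialize (Hc2 ltac:(intros x Hx; apply fc; split; [apply Rdiv_lt_0_compat; nra|];
       apply Rmult_lt_reg_r with (x+1); [lra|]; replace (T*x/(x+1)*(x+1)) with (T*x) by (field; lra); nra)).
  specialize (Hc2 ltac:(intros x Hx; split; [unfold T; auto_derive; [lra| field; lra] |
       apply contR; auto_derive; nra])).
  specialize (Hc1 ltac:(intros x Hx; apply fc; split; [apply Rdiv_lt_0_compat; nra|];
       apply Rmult_lt_reg_r with (x+1); [lra|]; replace (T/(x+1)*(x+1)) with T by (field; lra); nra)).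
  specialize (Hc1 ltac:(intros x Hx; split; [unfold T; auto_derive; [lra| field; lra] |
       apply contR; auto_derive; nra])).
  set (J1 := RInt f (T/2) lam) in *. set (J2 := RInt f (T/2) t) in *.
  assert (Hf1 : is_RInt f (T/2) lam J1).
  { apply (@RInt_correct R_CompleteNormedModule), (@ex_RInt_continuous R_CompleteNormedModule).
    intros z Hz. rewrite Rmin_right, Rmax_left in Hz by (unfold T; lra). apply fc. unfold T in *; lra. }
  assert (Hf2 : is_RInt f (T/2) t J2).
  { apply (@RInt_correct R_CompleteNormedModule), (@ex_RInt_continuous R_CompleteNormedModule).
    intros z Hz. rewrite Rmin_left, Rmax_right in Hz by (unfold T; lra). apply fc. unfold T in *; lra. }
  pose proof (is_RInt_Chasles f lam (T/2) t _ _ (is_RInt_swap f lam (T/2) J1 Hf1) Hf2) as Hf.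
  set (Hfun := fun v => / Rpower T (2*nu) * (Rpower (v+1) (2*nu) / Rpower v (nu+1))).
  assert (HH : is_RInt Hfun 1 b (J2 - J1)).
  { eapply is_RInt_ext; [|apply (iminus _ _ _ _ _ _ Hc2 Hc1)].
    intros x Hx. rewrite Rmin_left, Rmax_right in Hx by lra. unfold f, Hfun.
    fold T. rewrite E2, E1 by lra. toR. field. nz. }
  assert (HK1 : is_RInt (fun u => / Rpower u (nu + 1) * (/ Rpower (t + lam - u) nu - / Rpower t nu)) lam t
                 ((- J1 + J2) - / Rpower t nu * ((/ Rpower lam nu - / Rpower t nu)/nu))).
  { eapply is_RInt_ext; [|apply (iminus _ _ _ _ _ _ Hf (iscal _ _ _ (/ Rpower t nu) _ (I1 nu lam t Hnu ltac:(lra))))].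
    intros x Hx. rewrite Rmin_left, Rmax_right in Hx by lra. unfold f.
    rewrite Pp1 by lra. pose proof (Ppos x nu). pose proof (Ppos t nu). toR. field. nz. }
  set (mg := fun v => (Rpower (v + 1) (2 * nu) - Rpower v (2 * nu)) / Rpower v (nu + 1)).
  assert (HM1 : is_RInt (fun v => / Rpower T (2*nu) * mg v) 1 b
                 ((J2 - J1) - / Rpower T (2*nu) * ((Rpower b nu - 1)/nu))).
  { eapply is_RInt_ext; [|apply (iminus _ _ _ _ _ _ HH (iscal _ _ _ (/ Rpower T (2*nu)) _ (I3 nu b Hnu Hb)))].
    intros x Hx. rewrite Rmin_left, Rmax_right in Hx by lra. unfold mg, Hfun.
    rewrite Pp1 by lra. rewrite (P2 x nu). pose proof (Ppos x nu). pose proof (Ppos T (2*nu)). toR. field. nz. }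
  assert (HM2 : is_RInt (fun v => / Rpower T (2*nu) * mg v) 1 b (/ Rpower T (2*nu) * RInt mg 1 b)).
  { apply iscal. apply (@RInt_correct R_CompleteNormedModule), (@ex_RInt_continuous R_CompleteNormedModule).
    intros z Hz. rewrite Rmin_left, Rmax_right in Hz by lra. unfold mg. apply contR.
    unfold Rpower. auto_derive. sc. }
  assert (EM : / Rpower T (2*nu) * RInt mg 1 b = (J2 - J1) - / Rpower T (2*nu) * ((Rpower b nu - 1)/nu)).
  { rewrite <- (is_RInt_unique _ _ _ _ HM2). apply (is_RInt_unique _ _ _ _ HM1). }
  assert (EK : K1 nu lam t = (- J1 + J2) - / Rpower t nu * ((/ Rpower lam nu - / Rpower t nu)/nu)).
  { unfold K1. apply (is_RInt_unique _ _ _ _ HK1). }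
  unfold K1_main. fold T. fold b. change (RInt _ 1 b) with (RInt mg 1 b).
  rewrite EM, EK. ring.
Qed.

Lemma part2 (nu lam : R) (Hnu : 0 < nu) (Hlam : 0 < lam) :
  (forall eps : R, 0 < eps -> exists T : R, lam < T /\ forall t : R, T <= t ->
     Rpower t (expo nu) * K2 nu lam t <= 2 / (nu * Rpower lam nu) + eps).
Proof.
  intros eps He.
  set (q := expo nu).
  assert (Hq : 0 < q /\ q <= nu + 1).
  { unfold q, expo. split. apply Rmin_case; lra. apply Rmin_r. }
  set (th := nu / (nu+1)).
  assert (Hth : 0 < th <= 1).
  { unfold th. split. apply Rdiv_lt_0_compat; lra. apply div_le1; lra. }
  set (sg := nu - th).
  assert (Hsg : 0 < sg).
  { unfold sg, th. replace (nu - nu/(nu+1)) with (nu*nu/(nu+1)) by (field; lra).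
    apply Rdiv_lt_0_compat; nra. }
  set (K := 2*q*exp q).
  assert (HK : 0 < K) by (unfold K; pose proof (exp_pos q); nra).
  pose proof (Ppos lam sg) as Pas. pose proof (Ppos lam nu) as Pan.
  set (M := 2*K/(sg*Rpower lam sg*eps)).
  assert (HM : 0 < M) by (unfold M; apply Rdiv_lt_0_compat; [lra| repeat apply Rmult_lt_0_compat; lra]).
  set (Z := exp (ln M / th)).
  assert (HZ : 0 < Z) by apply exp_pos.
  exists (lam + Z). split. lra.
  intros t Ht.
  assert (Hat : 0 < lam < t) by lra.
  set (k := K * / Rpower (t+lam) th).
  assert (Hk : 0 < k) by (unfold k; apply Rmult_lt_0_compat; [lra| apply Rinv_0_lt_compat, Ppos]).
  assert (HK2 : is_RInt (fun u => / (Rpower u (nu + 1) * Rpower (t + lam - u) q)) lam t (K2 nu lam t)).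
  { unfold K2. apply (@RInt_correct R_CompleteNormedModule), (@ex_RInt_continuous R_CompleteNormedModule). intros x Hx.
    rewrite Rmin_left, Rmax_right in Hx by lra.
    apply contR. unfold Rpower. auto_derive. sc. }
  pose proof (iscal _ _ _ (Rpower t q) _ HK2) as HS.
  assert (Hb : is_RInt (fun u =>
     (/ (Rpower u nu * u) + k * / (Rpower u sg * u)) +
     (/ (Rpower (t+lam-u) nu * (t+lam-u)) + k * / (Rpower (t+lam-u) sg * (t+lam-u))))
     lam t
     (((/Rpower lam nu - /Rpower t nu)/nu + k * ((/Rpower lam sg - /Rpower t sg)/sg)) +
      ((/Rpower lam nu - /Rpower t nu)/nu + k * ((/Rpower lam sg - /Rpower t sg)/sg)))).
  { apply (iplus (fun u => / (Rpower u nu * u) + k * / (Rpower u sg * u))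
                 (fun u => / (Rpower (t+lam-u) nu * (t+lam-u)) + k * / (Rpower (t+lam-u) sg * (t+lam-u)))).
    - apply (iplus (fun u => / (Rpower u nu * u)) (fun u => k * / (Rpower u sg * u))).
      + apply I1; lra.
      + apply (iscal (fun u => / (Rpower u sg * u))). apply I1; lra.
    - apply (iplus (fun u => / (Rpower (t+lam-u) nu * (t+lam-u))) (fun u => k * / (Rpower (t+lam-u) sg * (t+lam-u)))).
      + apply I2; lra.
      + apply (iscal (fun u => / (Rpower (t+lam-u) sg * (t+lam-u)))). apply I2; lra. }
  pose proof (is_RInt_le _ _ lam t _ _ (Rlt_le _ _ (proj2 Hat)) HS Hb) as Hle.
  assert (Hle' : Rpower t q * K2 nu lam t <=
     (((/Rpower lam nu - /Rpower t nu)/nu + k * ((/Rpower lam sg - /Rpower t sg)/sg)) +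
      ((/Rpower lam nu - /Rpower t nu)/nu + k * ((/Rpower lam sg - /Rpower t sg)/sg)))).
  { apply Hle. intros x Hx.
    pose proof (PW nu q th lam t x Hnu (proj1 Hq) (proj2 Hq) Hth Hlam ltac:(lra)) as P.
    fold sg in P. fold K in P. fold k in P. replace (t+lam) with (t+lam) in P by ring. exact P. }
  fold q. eapply Rle_trans; [exact Hle'|].
  assert (Pt1 : 0 < / Rpower t nu / nu) by (apply Rdiv_lt_0_compat; [apply Rinv_0_lt_compat, Ppos| lra]).
  assert (Pt2 : 0 < / Rpower t sg / sg) by (apply Rdiv_lt_0_compat; [apply Rinv_0_lt_compat, Ppos| lra]).
  assert (Hk2 : k * (/ Rpower lam sg / sg) <= eps / 2).
  { unfold k.
    assert (HP : M <= Rpower (t+lam) th).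
    { unfold Rpower. rewrite <- (exp_ln M) by lra. apply expLe.
      assert (ln Z <= ln (t+lam)) by (apply ln_le; lra).
      unfold Z in H. rewrite ln_exp in H.
      apply Rmult_le_compat_l with (r := th) in H; [|lra].
      replace (th * (ln M / th)) with (ln M) in H by (field; lra). lra. }
    pose proof (Ppos (t+lam) th).
    apply Rle_trans with (K * / M * (/ Rpower lam sg / sg)).
    { apply Rmult_le_compat_r. left; apply Rdiv_lt_0_compat; [apply Rinv_0_lt_compat; lra| lra].
      apply Rmult_le_compat_l; [lra|]. apply Rinv_le_contravar; lra. }
    right. unfold M. field. repeat split; lra. }
  assert (E : 2 / (nu * Rpower lam nu) = 2 * (/ Rpower lam nu / nu)) by (field; lra).
  rewrite E.
  pose proof (Ppos t sg). pose proof (Ppos t nu).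
  assert (k * ((/ Rpower lam sg - / Rpower t sg) / sg) = k * (/ Rpower lam sg / sg) - k * (/ Rpower t sg / sg)) by (field; lra).
  assert (0 < k * (/ Rpower t sg / sg)) by (apply Rmult_lt_0_compat; lra).
  assert ((/ Rpower lam nu - / Rpower t nu) / nu = / Rpower lam nu / nu - / Rpower t nu / nu) by (field; lra).
  lra.
Qed.

Theorem lemma3p4 (nu lam : R) (Hnu : 0 < nu) (Hlam : 0 < lam) :
  (exists C T : R, lam < T /\ forall t : R, T <= t ->
     Rabs (K1 nu lam t - K1_main nu lam t) <= C * Rpower t (- nu - 1))
  /\
  (forall eps : R, 0 < eps -> exists T : R, lam < T /\ forall t : R, T <= t ->
     Rpower t (expo nu) * K2 nu lam t <= 2 / (nu * Rpower lam nu) + eps).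
Proof.
  split.
  - exists (2*lam*/Rpower lam nu), (lam+1). split; [lra|].
    intros t Ht. rewrite K1_eq by lra. apply final; lra.
  - apply part2; auto.
Qed.
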